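(* Let $G$ be a complete graph on an infinite vertex set, let $v\in V(G)$, and let $M$ be a perfect matching of $G-v$. Define $w(e)=0$ if $e\in M$ and $w(e)=1$ otherwise. Then there is no perfect matching $N$ of $G$ such that every perfect matching $N'$ of $G$ with $|N\setminus N'|,|N'\setminus N|<\infty$ satisfies $w[N'\setminus N]\ge w[N\setminus N']$.
   Context: A matching is perfect if every vertex is covered by it. For a set $F$ of edges, $w[F]:=\sum_{e\in F}w(e)$. *)

(* Defs.v *)
(* An edge set of the complete graph on V is a relation F : V -> V -> Prop,
   read as the set of unordered pairs {x,y} (x <> y) with F x y; edge sets
   are required to be symmetric and irreflexive where relevant. *)
From Stdlib Require Import List Arith ClassicalEpsilon.
Import ListNotations.

Definition infinite_type (V : Type) : Prop :=
  ~ exists l : list V, forall x : V, In x l.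

Definition sym_irrefl {V : Type} (F : V -> V -> Prop) : Prop :=
  (forall x y, F x y -> F y x) /\ (forall x, ~ F x x).

Definition perfect_matching {V : Type} (N : V -> V -> Prop) : Prop :=
  sym_irrefl N /\ forall x, exists y, N x y /\ forall z, N x z -> z = y.

Definition perfect_matching_minus {V : Type} (v : V) (M : V -> V -> Prop) : Prop :=
  sym_irrefl M /\ (forall y, ~ M v y) /\
  forall x, x <> v -> exists y, M x y /\ forall z, M x z -> z = y.

Definition edge_diff {V : Type} (F F' : V -> V -> Prop) : V -> V -> Prop :=
  fun x y => F x y /\ ~ F' x y.

Definition enumerates {V : Type} (F : V -> V -> Prop) (l : list (V * V)) : Prop :=
  NoDup l /\
  (forall x y, In (x, y) l -> F x y) /\
  (forall x y, In (x, y) l -> ~ In (y, x) l) /\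
  (forall x y, F x y -> In (x, y) l \/ In (y, x) l).

Definition finite_edges {V : Type} (F : V -> V -> Prop) : Prop :=
  exists l, enumerates F l.

Definition wM {V : Type} (M : V -> V -> Prop) (x y : V) : nat :=
  if excluded_middle_informative (M x y) then 0 else 1.

Definition wsum {V : Type} (M : V -> V -> Prop) (l : list (V * V)) : nat :=
  fold_right (fun p acc => wM M (fst p) (snd p) + acc) 0 l.

(* Main.v *)
Require Import Defs.
From Stdlib Require Import List Arith ClassicalEpsilon Classical.
Import ListNotations.

Theorem mainTheorem8 (V : Type) (Hinf : infinite_type V) (v : V)
  (M : V -> V -> Prop) (HM : perfect_matching_minus v M) :
  ~ exists N : V -> V -> Prop,
      perfect_matching N /\
      forall N' : V -> V -> Prop,
        perfect_matching N' ->
        finite_edges (edge_diff N N') ->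
        finite_edges (edge_diff N' N) ->
        forall l1 l2,
          enumerates (edge_diff N' N) l1 ->
          enumerates (edge_diff N N') l2 ->
          wsum M l2 <= wsum M l1.
Proof.
  intros [N [[[Nsym Nirr] Nex] H]].
  destruct HM as [[Msym Mirr] [Mv Mex]].
  assert (Nu : forall x y z, N x y -> N x z -> y = z).
  { intros x y z h1 h2. destruct (Nex x) as [w [_ hw]].
    rewrite (hw _ h1), (hw _ h2). reflexivity. }
  destruct (Nex v) as [u [Hvu _]].
  assert (uv : u <> v) by (intro e; subst; apply (Nirr v); auto).
  destruct (Mex u uv) as [a [Hua Mu]].
  destruct (Nex a) as [b [Hab _]].
  assert (au : a <> u) by (intro e; subst; apply (Mirr u); auto).
  assert (av : a <> v) by (intro e; subst; apply (Mv u); auto).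
  assert (ba : b <> a) by (intro e; subst; apply (Nirr a); auto).
  assert (bu : b <> u).
  { intro e; subst. apply av. apply (Nu u); auto. }
  assert (bv : b <> v).
  { intro e; subst. apply au. apply (Nu v); auto. }
  assert (nMab : ~ M a b).
  { intro h. apply bu. destruct (Mex a av) as [w [_ hw]].
    rewrite (hw _ h), (hw _ (Msym _ _ Hua)). reflexivity. }
  assert (nMvb : ~ M v b) by apply Mv.
  assert (nMvu : ~ M v u) by apply Mv.
  assert (nNua : ~ N u a).
  { intro h. apply av. apply (Nu u); auto. }
  assert (nNvb : ~ N v b).
  { intro h. apply bu. apply (Nu v); auto. }
  set (P := fun x y : V => (x = u /\ y = a) \/ (x = a /\ y = u) \/ (x = v /\ y = b) \/ (x = b /\ y = v)).
  set (N' := fun x y => P x y \/ (N x y /\ x <> v /\ x <> u /\ x <> a /\ x <> b)).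
  assert (out : forall x y, N x y -> x <> v -> x <> u -> x <> a -> x <> b ->
     y <> v /\ y <> u /\ y <> a /\ y <> b).
  { intros x y h h1 h2 h3 h4. repeat split; intro e; subst.
    - apply h2. apply (Nu v); auto.
    - apply h1. apply (Nu u); auto.
    - apply h4. apply (Nu a); auto.
    - apply h3. apply (Nu b); auto. }
  assert (PM : perfect_matching N').
  { split; [split|].
    - intros x y [hp|[h [h1 [h2 [h3 h4]]]]].
      + left. unfold P in *. intuition.
      + right. split; auto. apply (out x y h); auto.
    - intros x [hp|[h _]]; [|exact (Nirr x h)].
      unfold P in hp; destruct hp as [[e1 e2]|[[e1 e2]|[[e1 e2]|[e1 e2]]]];
        subst; congruence.
    - intros x.
      destruct (classic (x = u)) as [->|xu].
      { exists a. split. left; left; auto.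
        intros z [hp|[_ [_ [h _]]]]; [|congruence].
        unfold P in hp; intuition congruence. }
      destruct (classic (x = a)) as [->|xa].
      { exists u. split. left; right; left; auto.
        intros z [hp|[_ [_ [_ [h _]]]]]; [|congruence].
        unfold P in hp; intuition congruence. }
      destruct (classic (x = v)) as [->|xv].
      { exists b. split. left; right; right; left; auto.
        intros z [hp|[_ [h _]]]; [|congruence].
        unfold P in hp; intuition congruence. }
      destruct (classic (x = b)) as [->|xb].
      { exists v. split. left; right; right; right; auto.
        intros z [hp|[_ [_ [_ [_ h]]]]]; [|congruence].
        unfold P in hp; intuition congruence. }
      destruct (Nex x) as [y [hy _]]. exists y. split.
      + right; auto.
      + intros z [hp|[h _]]. unfold P in hp; intuition congruence.
        apply (Nu x); auto. }
  assert (E1 : enumerates (edge_diff N' N) [(u,a);(v,b)]).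
  { split; [|split; [|split]].
    - constructor. simpl. intros [e|[]]. congruence. constructor; auto. constructor.
    - intros x y hin. simpl in hin. unfold edge_diff, N', P.
      destruct hin as [e|[e|[]]]; inversion e; subst; split; auto 10.
    - intros x y hin hin'. simpl in *. intuition congruence.
    - intros x y [hp hn]. simpl. destruct hp as [hp|[h _]]; [|contradiction].
      unfold P in hp. destruct hp as [[e1 e2]|[[e1 e2]|[[e1 e2]|[e1 e2]]]];
        subst; auto. }
  assert (E2 : enumerates (edge_diff N N') [(v,u);(a,b)]).
  { split; [|split; [|split]].
    - constructor. simpl. intros [e|[]]. congruence. constructor; auto. constructor.
    - intros x y hin. simpl in hin. unfold edge_diff, N', P.
      destruct hin as [e|[e|[]]]; inversion e; subst; split; auto;
        intros [hp|[_ hh]]; intuition congruence.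
    - intros x y hin hin'. simpl in *. intuition congruence.
    - intros x y [h hn]. simpl.
      destruct (classic (x = v)) as [->|xv]. { assert (y = u) by (apply (Nu v); auto). subst; simpl; auto. }
      destruct (classic (x = u)) as [->|xu].
      { assert (y = v) by (apply (Nu u); auto). subst; simpl; auto. }
      destruct (classic (x = a)) as [->|xa]. { assert (y = b) by (apply (Nu a); auto). subst; simpl; auto. }
      destruct (classic (x = b)) as [->|xb].
      { assert (y = a) by (apply (Nu b); auto). subst; simpl; auto. }
      exfalso. apply hn. right. auto. }
  assert (HH := H N' PM (ex_intro _ _ E2) (ex_intro _ _ E1) _ _ E1 E2).
  unfold wsum, wM in HH. simpl in HH.
  destruct (excluded_middle_informative (M v u)); [contradiction|].
  destruct (excluded_middle_informative (M a b)); [contradiction|].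
  destruct (excluded_middle_informative (M u a)); [|contradiction].
  destruct (excluded_middle_informative (M v b)); [contradiction|].
  simpl in HH. apply (Nat.nle_succ_0 0). apply le_S_n. exact HH.
Qed.
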